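(* Let $G$ be a non-regular simple graph on $n$ vertices, and let $u,v$ be vertices of $G$ with $d_G(u)<d_G(v)$. If $F_k(G)$ is regular for some integer $k$ with $2\le k\le n-2$, then $v$ is adjacent in $G$ to every vertex of $V(G)\setminus\{u,v\}$.
   Context: For a simple graph $G=(V,E)$ on $n$ vertices and an integer $1\le k<n$, the $k$-token graph $F_k(G)$ is the graph whose vertices are all $k$-element subsets of $V$, two such subsets $A,B$ being adjacent whenever their symmetric difference $A\triangle B$ is a pair $\{a,b\}$ with $a$ adjacent to $b$ in $G$. $d_G(x)$ denotes the degree of $x$ in $G$. *)

(* Defs.v *)
From mathcomp Require Import all_boot.
Set Implicit Arguments. Unset Strict Implicit. Unset Printing Implicit Defensive.

Definition simple_graph (T : finType) (e : rel T) : Prop :=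
  symmetric e /\ irreflexive e.

Definition deg (T : finType) (e : rel T) (x : T) : nat := #|[set y | e x y]|.

Definition regular_graph (T : finType) (e : rel T) : Prop :=
  forall x y : T, deg e x = deg e y.

Definition token_adj (T : finType) (e : rel T) (A B : {set T}) : bool :=
  [exists a, exists b, e a b && ((A :\: B) :|: (B :\: A) == [set a; b])].

(* Vertices of F_k(G) are the k-subsets; the degree of A in F_k(G). *)
Definition token_deg (T : finType) (e : rel T) (k : nat) (A : {set T}) : nat :=
  #|[set B : {set T} | (#|B| == k) && token_adj e A B]|.

Definition token_regular (T : finType) (e : rel T) (k : nat) : Prop :=
  forall A B : {set T}, #|A| = k -> #|B| = k -> token_deg e k A = token_deg e k B.

(* Main.v *)
Require Import Defs.
From mathcomp Require Import all_boot.
From mathcomp Require Import zify.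

Section S.
Variables (T : finType) (e : rel T).
Hypothesis esym : symmetric e.
Hypothesis eirr : irreflexive e.

Definition cross (A : {set T}) : nat :=
  \sum_a \sum_b ((a \in A) && (b \notin A) && e a b : nat).

Lemma cross_card A :
  cross A = #|[set p : T * T | (p.1 \in A) && (p.2 \notin A) && e p.1 p.2]|.
Proof.
rewrite /cross pair_big /= -sum1_card [RHS]big_mkcond /=.
by apply: eq_bigr => p _; rewrite inE; case: (_ && _).
Qed.


Lemma token_deg_cross k (A : {set T}) : #|A| = k -> token_deg e k A = cross A.
Proof.
move=> hA; rewrite cross_card.
set P := [set p : T * T | _].
pose f (p : T * T) := (A :\ p.1) :|: [set p.2].
have finj : {in P &, injective f}.
  move=> [a b] [a' b']; rewrite !inE /= => /andP[/andP[ha hb] hab] /andP[/andP[ha' hb'] hab'].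
  rewrite /f /= => hf.
  have hbb : b = b'.
    have : b \in (A :\ a) :|: [set b] by rewrite !inE eqxx orbT.
    rewrite hf !inE; case/orP => [/andP[_ hbA] | /eqP //]; by rewrite hbA in hb.
  subst b'; congr pair.
  apply/eqP; apply/negPn/negP => hne.
  have : a \in (A :\ a') :|: [set b] by rewrite !inE hne ha.
  rewrite -hf !inE eqxx /=; apply/negP; apply/eqP => hab2; subst b; by rewrite ha in hb.
rewrite /token_deg -(card_in_imset finj); apply: eq_card => B; rewrite inE; apply/andP/imsetP.
- case=> /eqP hB /existsP[a] /existsP[b] /andP[hab /eqP hD].
  have anb : a != b by apply/eqP => h; subst b; rewrite eirr in hab.
  have cardD : #|A :\: B| = #|B :\: A|.
    by rewrite !cardsD hA hB setIC.
  have key : forall a b, a \in A -> e a b -> (A :\: B) :|: (B :\: A) = [set a; b] -> a != b ->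
      exists2 p, p \in P & B = f p.
    move=> a0 b0 ha0 hab0 hD0 anb0.
    have hb0 : b0 \in (A :\: B) :|: (B :\: A) by rewrite hD0 !inE eqxx orbT.
    have ha0' : a0 \in (A :\: B) :|: (B :\: A) by rewrite hD0 !inE eqxx.
    have a0B : a0 \notin B by move: ha0'; rewrite !inE ha0 /=; case: (a0 \in B).
    have b0B : (b0 \in B) && (b0 \notin A).
      move: hb0; rewrite !inE; case hbA: (b0 \in A); case hbB: (b0 \in B) => //= _.
      exfalso.
      have h1 : B :\: A = set0.
        apply/setP => x; rewrite !inE; apply/negP => /andP[xA xB].
        have : x \in (A :\: B) :|: (B :\: A) by rewrite !inE xA xB.
        rewrite hD0 !inE; case/orP => /eqP ?; subst x.
          by rewrite ha0 in xA.
        by rewrite hbA in xA.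
      have : 2 <= #|A :\: B|.
        apply/card_gt1P; exists a0, b0; rewrite !inE ha0 hbA hbB a0B; split=> //.
      by rewrite cardD h1 cards0.
    case/andP: b0B => b0B b0A.
    exists (a0, b0); first by rewrite inE /= ha0 b0A hab0.
    apply/setP => x; rewrite /f /= !inE.
    case: (eqVneq x b0) => [->|xb]; first by rewrite b0B orbT.
    case: (eqVneq x a0) => [->|xa]; first by rewrite (negbTE a0B).
    rewrite orbF /=.
    have : (x \in (A :\: B) :|: (B :\: A)) = false by rewrite hD0 !inE (negbTE xa) (negbTE xb).
    by rewrite !inE; case: (x \in A); case: (x \in B).
  case haA: (a \in A); first exact: (key a b haA hab hD anb).
  apply: (key b a) => //.
  + have : a \in (A :\: B) :|: (B :\: A) by rewrite hD !inE eqxx.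
    have : b \in (A :\: B) :|: (B :\: A) by rewrite hD !inE eqxx orbT.
    rewrite !inE haA /=.
    case hbA: (b \in A) => //=; rewrite ?andbT ?andbF ?orbF /= => hbB haB; exfalso.
    have h1 : A :\: B = set0.
      apply/setP => x; rewrite !inE; apply/negP => /andP[xB xA].
      have : x \in (A :\: B) :|: (B :\: A) by rewrite !inE xA xB.
      rewrite hD !inE; case/orP => /eqP ?; subst x; [by rewrite haA in xA | by rewrite hbA in xA].
    have : 2 <= #|B :\: A|.
      apply/card_gt1P; exists a, b; rewrite !inE haA hbA hbB haB; split=> //.
    by rewrite -cardD h1 cards0.
  + by rewrite esym.
  + by rewrite hD setUC.
  + by rewrite eq_sym.
- case=> [[a b]] /[!inE] /= /andP[/andP[ha hb] hab] -> ; split.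
  have := cardsD1 a A; rewrite ha hA => hAa.
  rewrite /f /= cardsU cards1.
  have -> : (A :\ a) :&: [set b] = set0.
    apply/setP => x; rewrite !inE; apply/negP => /andP[/andP[_ xA] /eqP xb]; subst x.
    by rewrite xA in hb.
  rewrite cards0 subn0; apply/eqP; lia.
  apply/existsP; exists a; apply/existsP; exists b; rewrite hab /=.
  apply/eqP/setP => x; rewrite /f /= !inE.
  have anb : a != b by apply/eqP => h; subst b; rewrite ha in hb.
  case: (eqVneq x a) => [->|xa]; first by rewrite ha (negbTE anb) ?eqxx.
  case: (eqVneq x b) => [->|xb]; first by rewrite (negbTE hb) ?eqxx ?orbT ?andbT /=; case: (b == a).
  by rewrite /=; case: (x \in A).
Qed.

Definition Nb x (S : {set T}) : nat := \sum_b ((b \in S) && e x b : nat).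

Lemma deg_sum x : deg e x = \sum_b (e x b : nat).
Proof.
rewrite /deg -sum1_card [LHS]big_mkcond /=.
by apply: eq_bigr => b _; rewrite inE; case: (e x b).
Qed.

Lemma sum_pick1 (G : T -> T -> nat) v :
  \sum_a \sum_b ((a == v) * G a b) = \sum_b G v b.
Proof.
rewrite (bigD1 v) //= [X in _ + X]big1 ?addn0.
  by apply: eq_bigr => b _; rewrite eqxx mul1n.
by move=> a /negbTE av; apply: big1 => b _; rewrite av mul0n.
Qed.

Lemma sum1_eq (P : pred T) y : \sum_b ((b == y) && P b : nat) = P y.
Proof.
rewrite (bigD1 y) //= eqxx big1 ?addn0 // => b /negbTE -> //.
Qed.

Lemma Nb_add x y (R : {set T}) : y \notin R -> Nb x (y |: R) = Nb x R + e x y.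
Proof.
move=> yR; rewrite /Nb -(sum1_eq (e x) y) -big_split /=.
apply: eq_bigr => b _; rewrite !inE.
case: (eqVneq b y) => [->|by_]; first by rewrite ?eqxx (negbTE yR) /=; case: (e x y).
by case: (b \in R); case: (e x b).
Qed.

Lemma key v (S : {set T}) : v \notin S -> cross (v |: S) + Nb v S + Nb v S = cross S + deg e v.
Proof.
move=> vS.
have h1 : Nb v S = \sum_a \sum_b ((a == v) * ((b \in S) && e a b)).
  by rewrite sum_pick1.
have h2 : Nb v S = \sum_a \sum_b ((b == v) * ((a \in S) && e a b)).
  rewrite exchange_big /= (sum_pick1 (fun b a => (a \in S) && e a b)) /Nb.
  by apply: eq_bigr => b _; rewrite esym.
have h3 : deg e v = \sum_a \sum_b ((a == v) * e a b).
  by rewrite sum_pick1 deg_sum.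
rewrite {1}h1 h2 h3 /cross -!big_split /=; apply: eq_bigr => a _.
rewrite -!big_split /=; apply: eq_bigr => b _; rewrite !inE.
case: (eqVneq a v) => [->|av]; case: (eqVneq b v) => [->|bv];
  rewrite ?eirr ?(negbTE vS) /= ?andbF ?andbT ?muln0 ?mul0n ?mul1n ?addn0 //;
  by case: (_ \in S); case: (_ \in S); case: (e _ _).
Qed.

Lemma swap_eq u v k (S : {set T}) :
  token_regular e k -> u \notin S -> v \notin S -> #|S| = k.-1 -> 0 < k ->
  deg e v + 2 * Nb u S = deg e u + 2 * Nb v S.
Proof.
move=> treg uS vS hS k0.
have cu : #|u |: S| = k by rewrite cardsU1 uS hS; lia.
have cv : #|v |: S| = k by rewrite cardsU1 vS hS; lia.
have := treg _ _ cu cv; rewrite (token_deg_cross _ _ cu) (token_deg_cross _ _ cv) => hc.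
have := key _ _ uS; have := key _ _ vS; lia.
Qed.

Lemma main u v k : ~ regular_graph e -> deg e u < deg e v -> 2 <= k <= #|T| - 2 ->
  token_regular e k -> forall w : T, w != u -> w != v -> e v w.
Proof.
move=> _ hdeg hk treg w wu wv.
apply/negPn/negP => nvw.
have uv : u != v by apply/eqP => h; subst v; rewrite ltnn in hdeg.
pose W' := ~: [set u; v; w].
have cW : k.-1 <= #|W'|.
  have h3 : #|[set u; v; w]| <= 3.
    rewrite -setUA cardsU1 cards2; case: (_ \notin _); case: (_ != _) => //.
  have := cardsC [set u; v; w]; rewrite -/W'; lia.
case/card_geqP: cW => s [us ss subs].
pose S := [set x in s].
have hS : #|S| = k.-1 by rewrite cardsE (card_uniqP us).
have inS x : x \in S -> [&& x != u, x != v & x != w].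
  rewrite inE => /subs; rewrite !inE; by case: (x == u); case: (x == v); case: (x == w).
have uS : u \notin S by apply/negP => /inS; rewrite eqxx.
have vS : v \notin S by apply/negP => /inS; rewrite eqxx andbF.
have wS : w \notin S by apply/negP => /inS; rewrite eqxx !andbF.
have k0 : 0 < k by lia.
have hsw := swap_eq _ _ _ _ treg uS vS hS k0.
case: (pickP [pred y | (y \in S) && e v y && ~~ e u y]) => [y /= /andP[/andP[yS evy] neuy] | none]; last first.
  have : Nb v S <= Nb u S.
    apply: leq_sum => b _; have := none b; rewrite /=.
    by case: (b \in S); case: (e v b); case: (e u b).
  lia.
pose R := S :\ y.
have yR : y \notin R by rewrite in_setD1 eqxx.
have wR : w \notin R by rewrite in_setD1 (negbTE wS) andbF.
have SR : S = y |: R by rewrite setD1K.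
have cR : #|R| = k.-2.
  have := cardsD1 y S; rewrite yS hS /R; move: (#|S :\ y|) => m h; clear -h hk; lia.
have cS1 : #|w |: R| = k.-1 by rewrite cardsU1 wR cR; clear -hk; lia.
have uS1 : u \notin w |: R by rewrite in_setU1 in_setD1 eq_sym (negbTE wu) /= (negbTE uS) andbF.
have vS1 : v \notin w |: R by rewrite in_setU1 in_setD1 eq_sym (negbTE wv) /= (negbTE vS) andbF.
have h1 := swap_eq _ _ _ _ treg uS1 vS1 cS1 k0.
have e1 : Nb u S = Nb u R + e u y by rewrite {1}SR Nb_add.
have e2 : Nb v S = Nb v R + e v y by rewrite {1}SR Nb_add.
have e3 : Nb u (w |: R) = Nb u R + e u w by rewrite Nb_add.
have e4 : Nb v (w |: R) = Nb v R + e v w by rewrite Nb_add.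
move: hsw h1; rewrite e1 e2 e3 e4 evy (negbTE nvw) (negbTE neuy) /=.
move: (Nb u R) (Nb v R) (deg e u) (deg e v) hdeg => a b c d hdeg'; clear -hdeg'; lia.
Qed.
End S.

Theorem lemma3 (T : finType) (e : rel T) (u v : T) (k : nat) :
  simple_graph e ->
  ~ regular_graph e ->
  deg e u < deg e v ->
  2 <= k <= #|T| - 2 ->
  token_regular e k ->
  forall w : T, w != u -> w != v -> e v w.
Proof.
by case=> esym eirr; apply: main.
Qed.
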